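(* Assume (H1)–(H5) and (H4)$_{st}$. Let $u\in C(\mathbb{R}^n\times[0,T))$ be a viscosity solution of (1.1)–(1.2). Let $(x,t)\in\mathbb{R}^n\times(0,T)$ be a point where $u$ is differentiable and let $(\xi,\eta,u_\xi)\in C^1([0,t];\mathbb{R}^n\times\mathbb{R}^n\times\mathbb{R})$ solve the Lie equation on $[0,t]$ with terminal condition $\xi(t)=x$, $\eta(t)=D_xu(x,t)$, $u_\xi(t)=u(x,t)$. Then: If $(C_1,K_3)\ne(0,0)$, $$|D_xu(x,t)-\eta(0)|\le\Big(\frac{C_1\beta}{C_1+K_3}+|D_xu(x,t)|\Big)(e^{(C_1+K_3)t}-1),\qquad |D_xu(x,t)-\eta(0)|\le\Big(\frac{C_1\beta}{C_1+K_3}+|\eta(0)|\Big)(e^{(C_1+K_3)t}-1),$$ and consequently $$|\eta(0)|e^{-(C_1+K_3)t}-\frac{C_1\beta}{C_1+K_3}(1-e^{-(C_1+K_3)t})\le|D_xu(x,t)|\le|\eta(0)|e^{(C_1+K_3)t}+\frac{C_1\beta}{C_1+K_3}(e^{(C_1+K_3)t}-1).$$ Moreover: if $K_3=0$, $|\eta(0)|e^{-C_1t}-\beta(1-e^{-C_1t})\le|D_xu(x,t)|\le|\eta(0)|e^{C_1t}+\beta(e^{C_1t}-1)$; if $\beta=0$, $|\eta(0)|e^{-(C_1+K_3)t}\le|D_xu(x,t)|\le|\eta(0)|e^{(C_1+K_3)t}$; if $C_1=0$, $|\eta(0)|e^{-K_3t}\le|D_xu(x,t)|\le|\eta(0)|e^{K_3t}$;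 if $(C_1,K_3)=(0,0)$, $D_xu(x,t)=\eta(0)$.
   Context: $T>0$; $H:\mathbb{R}^n\times[0,T]\times\mathbb{R}\times\mathbb{R}^n\to\mathbb{R}$ continuous; $u_0$ Lipschitz. Problem (1.1)–(1.2): $u_t+H(x,t,u,D_xu)=0$ in $\mathbb{R}^n\times(0,T)$, $u(x,0)=u_0(x)$. (H1) there exist $C_1\ge0$, $\beta\in\{0,1\}$ with $|H(x,t,u,p)-H(y,t,u,p)|\le C_1(\beta+|p|)|x-y|$. (H2) there exist $A_2,B_2\ge0$ with $|H(x,t,u,p)-H(x,t,u,q)|\le(A_2|x|+B_2)|p-q|$. (H3) there exists $K_3\ge0$ with $|H(x,t,u,p)-H(x,t,v,p)|\le K_3|u-v|$. (H4) $p\mapsto H(x,t,u,p)$ convex. (H5) $H\in C^2(\mathbb{R}^n\times[0,T]\times\mathbb{R}\times\mathbb{R}^n)$. (H4)$_{st}$ $D_{pp}H(x,t,u,p)$ is positive definite everywhere. Viscosity solution: $u\in C(\mathbb{R}^n\times[0,T))$, $u(\cdot,0)=u_0$, and for every $\phi\in C^1(\mathbb{R}^n\times(0,T))$, if $u-\phi$ has a local max (resp. min) at $(x,t)\in\mathbb{R}^n\times(0,T)$ then $\phi_t+H(x,t,u(x,t),D_x\phi(x,t))\le0$ (resp. $\ge0$). Lie equation: $\xi'(s)=D_pH(\xi(s),s,u_\xi(s),\eta(s))$, $\eta'(s)=-D_xH(\xi(s),s,u_\xi(s),\eta(s))-D_uH(\xi(s),s,u_\xi(s),\eta(s))\eta(s)$,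 $u_\xi'(s)=\langle\eta(s),\xi'(s)\rangle-H(\xi(s),s,u_\xi(s),\eta(s))$. *)

(* Defs.v *)
From HB Require Import structures.
From mathcomp Require Import all_boot all_order all_algebra.
From mathcomp Require Import all_classical all_reals all_analysis.
Set Implicit Arguments. Unset Strict Implicit. Unset Printing Implicit Defensive.
Import Order.TTheory GRing.Theory Num.Theory.
Import numFieldNormedType.Exports.
Local Open Scope classical_set_scope.
Local Open Scope ring_scope.

Section Defs.
Variables (R : realType) (n : nat).

Definition enorm (p : 'rV[R]_n) : R := Num.sqrt (\sum_(i < n) p 0 i ^+ 2).
Definition dotv (p q : 'rV[R]_n) : R := \sum_(i < n) p 0 i * q 0 i.
Definition ev (i : 'I_n) : 'rV[R]_n := delta_mx 0 i.

Definition Hc (H : 'rV[R]_n -> R -> R -> 'rV[R]_n -> R)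
  (z : 'rV[R]_n * R * R * 'rV[R]_n) : R := H z.1.1.1 z.1.1.2 z.1.2 z.2.

Definition C2 {V : normedModType R} (f : V -> R) : Prop :=
  continuous f /\
  forall v w : V,
    (forall z, derivable f z v) /\ continuous ('D_v f) /\
    (forall z, derivable ('D_v f) z w) /\ continuous ('D_w ('D_v f)).

Definition DxH H x t u p : 'rV[R]_n :=
  \row_i 'D_((ev i, 0, 0, 0) : 'rV[R]_n * R * R * 'rV[R]_n) (Hc H) (x, t, u, p).
Definition DuH H x t u p : R :=
  'D_((0, 0, 1, 0) : 'rV[R]_n * R * R * 'rV[R]_n) (Hc H) (x, t, u, p).
Definition DpH H x t u p : 'rV[R]_n :=
  \row_i 'D_((0, 0, 0, ev i) : 'rV[R]_n * R * R * 'rV[R]_n) (Hc H) (x, t, u, p).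
Definition DppH H x t u p : 'M[R]_n :=
  \matrix_(i, j) 'D_((0, 0, 0, ev j) : 'rV[R]_n * R * R * 'rV[R]_n)
     ('D_((0, 0, 0, ev i) : 'rV[R]_n * R * R * 'rV[R]_n) (Hc H)) (x, t, u, p).

Definition posdef (A : 'M[R]_n) : Prop :=
  forall v : 'rV[R]_n, v != 0 -> 0 < (v *m A *m v^T) 0 0.

Definition uc (u : 'rV[R]_n -> R -> R) (z : 'rV[R]_n * R) : R := u z.1 z.2.
Definition Dx (f : 'rV[R]_n * R -> R) (z : 'rV[R]_n * R) : 'rV[R]_n :=
  \row_i 'D_((ev i, 0) : 'rV[R]_n * R) f z.
Definition Dt (f : 'rV[R]_n * R -> R) (z : 'rV[R]_n * R) : R :=
  'D_((0, 1) : 'rV[R]_n * R) f z.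

Definition C1_on (O : set ('rV[R]_n * R)) (f : 'rV[R]_n * R -> R) : Prop :=
  forall v : 'rV[R]_n * R,
    (forall z, O z -> derivable f z v) /\
    (forall z, O z -> {for z, continuous ('D_v f)}).

Definition strip (T : R) : set ('rV[R]_n * R) := [set z | 0 < z.2 < T].

Definition viscosity_solution (T : R) (H : 'rV[R]_n -> R -> R -> 'rV[R]_n -> R)
  (u0 : 'rV[R]_n -> R) (u : 'rV[R]_n -> R -> R) : Prop :=
  {within [set z : 'rV[R]_n * R | 0 <= z.2 < T], continuous (uc u)} /\
  (forall x, u x 0 = u0 x) /\
  forall phi : 'rV[R]_n * R -> R, C1_on (strip T) phi ->
  forall (x : 'rV[R]_n) (t : R), 0 < t < T ->
    ((\forall z \near (x, t), uc u z - phi z <= uc u (x, t) - phi (x, t)) ->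
       Dt phi (x, t) + H x t (u x t) (Dx phi (x, t)) <= 0) /\
    ((\forall z \near (x, t), uc u (x, t) - phi (x, t) <= uc u z - phi z) ->
       Dt phi (x, t) + H x t (u x t) (Dx phi (x, t)) >= 0).

(* (xi, eta, uxi) is a C^1 solution on [0,t] of the Lie equation: continuous
   on [0,t], and differentiable on (0,t) satisfying the equations there
   (the continuous right-hand side then makes the solution C^1 on [0,t]). *)
Definition lie_solution (H : 'rV[R]_n -> R -> R -> 'rV[R]_n -> R) (t : R)
  (xi eta : R -> 'rV[R]_n) (uxi : R -> R) : Prop :=
  {within [set s : R | 0 <= s <= t], continuous xi} /\
  {within [set s : R | 0 <= s <= t], continuous eta} /\
  {within [set s : R | 0 <= s <= t], continuous uxi} /\
  forall s, 0 < s < t ->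
    [/\ derivable xi s 1, derivable eta s 1, derivable uxi s 1 &
     [/\ derive1 xi s = DpH H (xi s) s (uxi s) (eta s),
        derive1 eta s = - DxH H (xi s) s (uxi s) (eta s)
                    - DuH H (xi s) s (uxi s) (eta s) *: eta s &
        derive1 uxi s = dotv (eta s) (derive1 xi s) - H (xi s) s (uxi s) (eta s)]].

End Defs.

(* Main.v *)
Require Import Defs.
From HB Require Import structures.
From mathcomp Require Import all_boot all_order all_algebra.
From mathcomp Require Import all_classical all_reals all_analysis.
From mathcomp Require Import ring lra.
Import Order.TTheory GRing.Theory Num.Theory.
Import numFieldNormedType.Exports.
Local Open Scope classical_set_scope.
Local Open Scope ring_scope.
Set Implicit Arguments. Unset Strict Implicit.
Section VecAlg.
Variables (R : realType) (n : nat).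
Implicit Types (a b w : 'rV[R]_n).

Definition N2 a : R := \sum_(i < n) a 0 i ^+ 2.

Lemma N2_ge0 a : 0 <= N2 a.
Proof. by apply: sumr_ge0 => i _; rewrite sqr_ge0. Qed.

Lemma enormE a : enorm a = Num.sqrt (N2 a).
Proof. by []. Qed.

Lemma enorm_ge0 a : 0 <= enorm a.
Proof. exact: sqrtr_ge0. Qed.

Lemma enorm_sqr a : enorm a ^+ 2 = N2 a.
Proof. by rewrite sqr_sqrtr // N2_ge0. Qed.

Lemma dotvC a b : dotv a b = dotv b a.
Proof. by apply: eq_bigr => i _; rewrite mulrC. Qed.

Lemma dotvD a b w : dotv w (a + b) = dotv w a + dotv w b.
Proof. by rewrite /dotv -big_split; apply: eq_bigr => i _; rewrite mxE mulrDr. Qed.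

Lemma dotvN a w : dotv w (- a) = - dotv w a.
Proof. by rewrite /dotv -sumrN; apply: eq_bigr => i _; rewrite mxE mulrN. Qed.

Lemma dotvZ (k : R) a w : dotv w (k *: a) = k * dotv w a.
Proof. by rewrite /dotv mulr_sumr; apply: eq_bigr => i _; rewrite mxE mulrCA. Qed.

Lemma dotvv a : dotv a a = N2 a.
Proof. by apply: eq_bigr => i _; rewrite expr2. Qed.

Lemma N2Z (k : R) a : N2 (k *: a) = k ^+ 2 * N2 a.
Proof. by rewrite /N2 mulr_sumr; apply: eq_bigr => i _; rewrite mxE exprMn. Qed.

Lemma enormZ (k : R) a : enorm (k *: a) = `|k| * enorm a.
Proof. by rewrite /enorm -/(N2 _) N2Z sqrtrM ?sqr_ge0 // sqrtr_sqr. Qed.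

Lemma enormN a : enorm (- a) = enorm a.
Proof. by rewrite -scaleN1r enormZ normrN normr1 mul1r. Qed.

Lemma enormB a b : enorm (a - b) = enorm (b - a).
Proof. by rewrite -enormN opprB. Qed.

Lemma N2_eq0 a : N2 a = 0 -> a = 0.
Proof.
move=> /eqP; rewrite psumr_eq0; last by move=> i _; rewrite sqr_ge0.
move=> /allP h; apply/rowP => i; rewrite mxE.
have := h i (mem_index_enum _) => /implyP/(_ isT).
by rewrite sqrf_eq0 => /eqP.
Qed.

Lemma enorm_eq0 a : enorm a = 0 -> a = 0.
Proof.
move=> h; apply: N2_eq0; rewrite -enorm_sqr h; by rewrite expr0n.
Qed.

Lemma sum_sqr_expand (p q : R) a b :
  \sum_(i < n) (p * a 0 i - q * b 0 i) ^+ 2 =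
   p ^+ 2 * N2 a - 2 * p * q * dotv a b + q ^+ 2 * N2 b.
Proof.
rewrite /N2 /dotv !mulr_sumr -sumrB -big_split /=.
by apply: eq_bigr => i _; ring.
Qed.

Lemma CS_sqr a b : dotv a b ^+ 2 <= N2 a * N2 b.
Proof.
have [Bz|Bp] := eqVneq (N2 b) 0.
  move/N2_eq0: (Bz) => ->; rewrite /dotv big1; last by move=> i _; rewrite mxE mulr0.
  by rewrite expr0n /= mulr_ge0 // N2_ge0.
have Bgt : 0 < N2 b by rewrite lt_def Bp N2_ge0.
have : 0 <= \sum_(i < n) (N2 b * a 0 i - dotv a b * b 0 i) ^+ 2.
  by apply: sumr_ge0 => i _; rewrite sqr_ge0.
rewrite sum_sqr_expand.
set A := N2 a; set B := N2 b; set D := dotv a b.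
move=> h.
have : 0 <= B * (A * B - D ^+ 2) by rewrite mulrBr; nra.
by rewrite pmulr_rge0 // subr_ge0.
Qed.

Lemma CS a b : `|dotv a b| <= enorm a * enorm b.
Proof.
rewrite /enorm -!/(N2 _) -sqrtrM ?N2_ge0 // -sqrtr_sqr.
by rewrite ler_sqrt ?CS_sqr // mulr_ge0 // N2_ge0.
Qed.

End VecAlg.
Section DirDeriv.
Variables (R : realType) (V : normedModType R).
Implicit Types (f : V -> R) (y z v w : V).

Lemma quotE f z v :
  (fun h : R => h^-1 *: ((f \o shift z) (h *: v) - f z)) =
  (fun h : R => h^-1 * (f (h *: v + z) - f z)).
Proof. by []. Qed.

Lemma line_is_derive f y v (tau : R) :
  derivable f (y + tau *: v) v ->
  is_derive tau 1 (fun s : R => f (y + s *: v)) ('D_v f (y + tau *: v)).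
Proof.
move=> df.
have E : (fun h : R => h^-1 *: (((fun s : R => f (y + s *: v)) \o shift tau) (h *: 1)
            - f (y + tau *: v))) =
         (fun h : R => h^-1 *: ((f \o shift (y + tau *: v)) (h *: v) - f (y + tau *: v))).
  apply/funext => h /=; congr (_ *: (_ - _)); congr f.
  by rewrite [h *: 1]mulr1 scalerDl addrCA addrA.
split; first by rewrite /derivable E.
by rewrite /derive E.
Qed.

End DirDeriv.
Section DirDeriv2.
Variables (R : realType) (V : normedModType R).
Implicit Types (f : V -> R) (y z v w : V).

Lemma dir_mvt f y v (s : R) : (forall x, derivable f x v) ->
  exists c : R, `|c| <= `|s| /\ f (y + s *: v) - f y = s * 'D_v f (y + c *: v).
Proof.
move=> df.
pose g := fun s : R => f (y + s *: v).
have gd : forall tau : R, is_derive tau (1:R) g ('D_v f (y + tau *: v)).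
  by move=> tau; apply: line_is_derive.
have gc : forall a b : R, {within `[a, b], continuous g}.
  move=> a b; apply: derivable_within_continuous => x _.
  by have [] := gd x.
have g0 : g 0 = f y by rewrite /g scale0r addr0.
have [s0|s0] := leP 0 s.
  have [c + E] := MVT_segment s0 (fun x _ => gd x) (gc 0 s).
  rewrite in_itv /= => /andP[c0 cs].
  exists c; split; first by rewrite !ger0_norm // (le_trans c0).
  by rewrite -g0 -/(g s) E subr0 mulrC.
have [c + E] := MVT_segment (ltW s0) (fun x _ => gd x) (gc s 0).
rewrite in_itv /= => /andP[sc c0].
exists c; split; first by rewrite !ler0_norm ?lerN2 // ltW.
rewrite -g0 -/(g s); apply: (@oppr_inj _); rewrite opprB E sub0r.
by rewrite mulrN mulrC.
Qed.

End DirDeriv2.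
Section DirDeriv3.
Variables (R : realType) (V : normedModType R).
Implicit Types (f : V -> R) (y z v w : V).

Lemma derive_bound f z v (B : R) : derivable f z v ->
  (forall h : R, h != 0 -> `|h^-1 * (f (h *: v + z) - f z)| <= B) ->
  `|'D_v f z| <= B.
Proof.
move=> df hB; apply/ler_addgt0Pr => e e0.
move/cvgrPdist_le : df => /(_ e e0) dfe.
near (0:R)^' => h.
have h0 : h != 0 by near: h; exact: nbhs_dnbhs_neq.
have := hB h h0.
have : `|'D_v f z - h^-1 * (f (h *: v + z) - f z)| <= e by near: h; exact: dfe.
move=> H1 H2.
rewrite -[X in `|X|](subrK (h^-1 * (f (h *: v + z) - f z))).
by rewrite (le_trans (ler_normD _ _)) // addrC lerD.
Unshelve. all: by end_near.
Qed.

End DirDeriv3.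
Section DirDeriv4.
Variables (R : realType) (V : normedModType R).
Implicit Types (f : V -> R) (y z v w : V).

Lemma derive_lin f z (a : R) v w :
  (forall x, derivable f x v) -> continuous ('D_v f) -> derivable f z w ->
  'D_(a *: v + w) f z = a * 'D_v f z + 'D_w f z.
Proof.
move=> dv cv dw.
apply: cvg_lim => //.
apply/cvgrPdist_le => e e0.
have e2 : 0 < e / 2 by rewrite divr_gt0.
have ea : 0 < e / 2 / (`|a| + 1) by rewrite divr_gt0 // ltr_wpDl.
move/cvgrPdist_le : dw => /(_ _ e2) dwe.
have := cv z; move/cvgrPdist_le => /(_ _ ea) /nbhs_ballP [r r0 rP].
set M := `|w| + `|a| * `|v| + 1.
have M0 : 0 < M by rewrite /M ltr_wpDl // addr_ge0 // mulr_ge0.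
have rM : 0 < r / M by rewrite divr_gt0.
near=> h.
have h0 : h != 0 by near: h; exact: nbhs_dnbhs_neq.
have hr : `|h| < r / M by near: h; exact: dnbhs0_lt.
have dwh : `|'D_w f z - h^-1 *: ((f \o shift z) (h *: w) - f z)| <= e / 2.
  by near: h; exact: dwe.
have [c [cle E]] := @dir_mvt R V f (z + h *: w) v (h * a) dv.
have Eqq : h^-1 *: ((f \o shift z) (h *: (a *: v + w)) - f z) =
   a * 'D_v f (z + h *: w + c *: v) + h^-1 *: ((f \o shift z) (h *: w) - f z).
  rewrite /= /shift /=.
  have -> : h *: (a *: v + w) + z = z + h *: w + (h * a) *: v.
    by rewrite scalerDr scalerA addrC addrCA addrC.
  rewrite -(subrK (f (z + h *: w)) (f (_ + _))) E.
  rewrite [h *: w + z]addrC -addrA scalerDr.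
  congr (_ + _); first by rewrite -[LHS]/(h^-1 * (h * a * _)) !mulrA mulVf // mul1r.
rewrite Eqq.
have Hball : ball z r (z + h *: w + c *: v).
  rewrite -ball_normE /= -addrA opprD addrA subrr sub0r normrN.
  rewrite (le_lt_trans (ler_normD _ _)) // !normrZ.
  have : `|h| * `|w| + `|c| * `|v| <= `|h| * M - `|h|.
    rewrite /M mulrDr mulr1 addrK mulrDr lerD2l.
    rewrite mulrA (ler_wpM2r (normr_ge0 _)) // (le_trans cle) //.
    by rewrite normrM.
  move/le_lt_trans; apply.
  have : `|h| * M < r by rewrite -ltr_pdivlMr // mulrC.
  have := normr_ge0 h; lra.
have := rP _ Hball; rewrite /= => Hv.
rewrite opprD addrACA -mulrBr.
rewrite (le_trans (ler_normD _ _)) // (splitr e) lerD // normrM.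
have : `|a| * `|'D_v f z - 'D_v f (z + h *: w + c *: v)| <=
        `|a| * (e / 2 / (`|a| + 1)) by rewrite ler_wpM2l.
move/le_trans; apply.
have a1 : 0 < `|a| + 1 by rewrite ltr_wpDl.
have kk := mulVf (lt0r_neq0 a1); have na := normr_ge0 a.
have ka : 0 < (`|a| + 1)^-1 by rewrite invr_gt0.
move: kk ka; move: ((`|a| + 1)^-1) => k kk ka.
move: kk na; move: (`|a|) => A kk na; nra.
Unshelve. all: by end_near.
Qed.

End DirDeriv4.
Lemma derive_lin_seq (R : realType) (V : normedModType R) (I : Type) (r : seq I)
  (a : I -> R) (vv : I -> V) (f : V -> R) z :
  (forall u x, derivable f x u) -> (forall u, continuous ('D_u f)) ->
  'D_(\sum_(j <- r) a j *: vv j) f z = \sum_(j <- r) a j * 'D_(vv j) f z.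
Proof.
move=> dv cv; elim: r => [|j r IH]; first by rewrite !big_nil derive0.
by rewrite !big_cons derive_lin // IH.
Qed.

Section Ham.
Variables (R : realType) (n : nat).
Local Notation V := ('rV[R]_n * R * R * 'rV[R]_n)%type.

Lemma pair_sum (I : Type) (r : seq I) (a : I -> R) (vv : I -> 'rV[R]_n) :
  \sum_(j <- r) a j *: ((vv j, 0, 0, 0) : V) = ((\sum_(j <- r) a j *: vv j), 0, 0, 0).
Proof.
elim: r => [|j r IH]; first by rewrite !big_nil.
rewrite !big_cons IH.
rewrite [LHS]surjective_pairing /= scaler0 addr0.
rewrite [X in (X, _)]surjective_pairing /= scaler0 addr0.
rewrite [X in (X, _, _)]surjective_pairing /= scaler0 addr0.
by [].
Qed.

Lemma dotv_DxH H w y s v p : C2 (Hc H) ->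
  dotv w (DxH H y s v p) = 'D_((w, 0, 0, 0) : V) (Hc H) (y, s, v, p).
Proof.
move=> [_ hC].
have dv : forall u x, derivable (Hc H) x u by move=> u x; case: (hC u u) => ? _; exact.
have cv : forall u, continuous ('D_u (Hc H)) by move=> u; case: (hC u u) => _ [].
rewrite {2}(row_sum_delta w).
have -> : (\sum_(j < n) w 0 j *: delta_mx 0 j, 0, 0, 0) =
   \sum_(j < n) w 0 j *: ((@ev R n j, 0, 0, 0) : V) by rewrite pair_sum.
rewrite derive_lin_seq //.
by apply: eq_bigr => i _; rewrite mxE.
Qed.

End Ham.
Section HamBounds.
Variables (R : realType) (n : nat).
Local Notation V := ('rV[R]_n * R * R * 'rV[R]_n)%type.

Lemma DxH_bound (H : 'rV[R]_n -> R -> R -> 'rV[R]_n -> R) (C1 beta T : R) y s v p w :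
  C2 (Hc H) -> 0 <= s <= T ->
  (forall y z s v p, 0 <= s <= T ->
     `|H y s v p - H z s v p| <= C1 * (beta + enorm p) * enorm (y - z)) ->
  `|dotv w (DxH H y s v p)| <= C1 * (beta + enorm p) * enorm w.
Proof.
move=> hC sT H1.
rewrite dotv_DxH //.
apply: derive_bound; first by case: hC => _ /(_ (w,0,0,0) (w,0,0,0)) [].
move=> h h0.
rewrite /Hc /= !scaler0 !add0r.
rewrite normrM normrV ?unitfE ?normr_eq0 //.
rewrite ler_pdivrMl ?normr_gt0 //.
apply: le_trans (H1 _ _ _ _ _ sT) _.
by rewrite addrK enormZ mulrCA.
Qed.

Lemma DuH_bound (H : 'rV[R]_n -> R -> R -> 'rV[R]_n -> R) (K3 T : R) y s v p :
  C2 (Hc H) -> 0 <= s <= T ->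
  (forall y s v w p, 0 <= s <= T ->
     `|H y s v p - H y s w p| <= K3 * `|v - w|) ->
  `|DuH H y s v p| <= K3.
Proof.
move=> hC sT H3.
rewrite /DuH.
apply: derive_bound; first by case: hC => _ /(_ (0,0,1,0) (0,0,1,0)) [].
move=> h h0.
rewrite /Hc /= !scaler0 !add0r.
rewrite normrM normrV ?unitfE ?normr_eq0 //.
rewrite ler_pdivrMl ?normr_gt0 //.
apply: le_trans (H3 _ _ _ _ _ sT) _.
by rewrite addrK mulrC [h *: 1]mulr1.
Qed.

End HamBounds.
Section Gron.
Variables (R : realType) (n : nat) (e : R -> 'rV[R]_n).

Lemma comp_is_derive (s : R) (i : 'I_n) : derivable e s 1 ->
  is_derive s (1:R) (fun r => e r 0 i) ((derive1 e s) 0 i).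
Proof.
move=> de; rewrite derive1E derive_mx // mxE.
by apply: derivableP; move/derivable_mxP : de; apply.
Qed.

Definition Kf (W : 'rV[R]_n) (d : R) (s : R) : R :=
  Num.sqrt (d ^+ 2 + \sum_(i < n) (e s 0 i - W 0 i) ^+ 2).

Lemma KfE W d s : Kf W d s = Num.sqrt (d ^+ 2 + N2 (e s - W)).
Proof. by rewrite /Kf /N2; congr (Num.sqrt (_ + _)); apply: eq_bigr => i _; rewrite !mxE. Qed.

Lemma Kf_gt0 W d s : 0 < d -> 0 < Kf W d s.
Proof. by move=> d0; rewrite KfE sqrtr_gt0 ltr_pwDl ?N2_ge0 // exprn_gt0. Qed.

Lemma Kf_ge W d s : enorm (e s - W) <= Kf W d s.
Proof. by rewrite KfE /enorm ler_sqrt ?lerDr ?sqr_ge0 // addr_ge0 ?sqr_ge0 ?N2_ge0. Qed.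

Lemma Kf_le W d s : 0 <= d -> Kf W d s <= enorm (e s - W) + d.
Proof.
move=> d0; rewrite KfE.
have E0 := enorm_ge0 (e s - W).
rewrite -(ger0_norm (addr_ge0 E0 d0)) -sqrtr_sqr ler_sqrt ?sqr_ge0 //.
rewrite -enorm_sqr; nra.
Qed.

Lemma Kf_derive W d s : 0 < d -> derivable e s 1 ->
  derivable (Kf W d) s 1 /\
  derive1 (Kf W d) s = dotv (e s - W) (derive1 e s) / Kf W d s.
Proof.
move=> d0 de.
pose phi i := fun r => e r 0 i - W 0 i.
have dphi i : is_derive s (1:R) (phi i) ((derive1 e s) 0 i).
  have := @is_deriveB _ _ _ (fun r => e r 0 i) (cst (W 0 i)) s 1 _ _ (comp_is_derive i de) (is_derive_cst _ _ _).
  by rewrite subr0.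
have dsq i : is_derive s (1:R) (phi i * phi i) (phi i s *: (derive1 e s) 0 i + phi i s *: (derive1 e s) 0 i).
  exact: is_deriveM.
have dsum := is_derive_sum dsq.
have dQ := is_deriveD (is_derive_cst (d ^+ 2) s 1) dsum.
have Qpos : 0 < (cst (d ^+ 2) + \sum_(i < n) (phi i * phi i)) s.
  rewrite /= fct_sumE /=; rewrite ltr_pwDl ?exprn_gt0 //.
  by apply: sumr_ge0 => i _; rewrite -expr2 sqr_ge0.
have dK := is_derive1_comp (is_derive1_sqrt Qpos) dQ.
have KE : Kf W d = Num.sqrt \o (cst (d ^+ 2) + \sum_(i < n) (phi i * phi i)).
  apply/funext => r; rewrite /Kf /= fct_sumE; by congr (Num.sqrt (_ + _)).
rewrite KE; split; first by case: dK.
rewrite derive1E derive_val add0r.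
rewrite -KE /dotv.
have -> : (cst (d ^+ 2) + \sum_(i < n) (phi i * phi i)) s = (Kf W d s) ^+ 2.
  rewrite KE /= sqr_sqrtr //; exact: ltW.
rewrite sqrtr_sqr ger0_norm; last exact/ltW/Kf_gt0.
have -> : \sum_(i < n) (phi i s *: (derive1 e s) 0 i + phi i s *: (derive1 e s) 0 i) =
   2 * \sum_(i < n) (e s - W) 0 i * (derive1 e s) 0 i.
  rewrite mulr_sumr; apply: eq_bigr => i _; rewrite !mxE /phi; rewrite /GRing.scale /=; ring.
have := Kf_gt0 W s d0; move: (Kf W d s) => k k0.
field; exact: lt0r_neq0.
Qed.

End Gron.
Section GronCont.
Variables (R : realType) (n : nat) (e : R -> 'rV[R]_n).

Lemma G_cont (W : 'rV[R]_n) (d : R) :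
  continuous (fun v : 'rV[R]_n => Num.sqrt (d ^+ 2 + \sum_(i < n) (v 0 i - W 0 i) ^+ 2)).
Proof.
move=> v; apply: (@continuous_comp _ _ _ (fun v : 'rV[R]_n => d ^+ 2 + \sum_(i < n) (v 0 i - W 0 i) ^+ 2) Num.sqrt); last exact: sqrt_continuous.
have -> : (fun v : 'rV[R]_n => d ^+ 2 + \sum_(i < n) (v 0 i - W 0 i) ^+ 2) =
  cst (d ^+ 2) + (fun v : 'rV[R]_n => \sum_(i < n) (v 0 i - W 0 i) ^+ 2) by [].
apply: continuousD; first exact: cst_continuous.
apply: (@continuous_big _ _ +%R 0 predT add_continuous _ _ (fun i (v : 'rV[R]_n) => (v 0 i - W 0 i) ^+ 2)).
move=> i _ w.
have -> : (fun v0 : 'rV[R]_n => (v0 0 i - W 0 i) ^+ 2) =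
   (fun v0 => v0 0 i - W 0 i) \* (fun v0 => v0 0 i - W 0 i).
  by apply/funext => v0; rewrite /= expr2.
apply: (@continuousM R _ (fun v0 : 'rV[R]_n => v0 0 i - W 0 i) (fun v0 => v0 0 i - W 0 i) w); apply: continuousB; [exact: coord_continuous | exact: cst_continuous| exact: coord_continuous | exact: cst_continuous].
Qed.

Lemma Kf_cont (A : set R) W d : {within A, continuous e} -> {within A, continuous (Kf e W d)}.
Proof.
move=> ce x.
pose G := (fun v : 'rV[R]_n => Num.sqrt (d ^+ 2 + \sum_(i < n) (v 0 i - W 0 i) ^+ 2)).
have h := (@continuous_comp (subspace A) _ _ e G x (ce x) (@G_cont W d (e x))).
exact h.
Qed.

End GronCont.
Section Mono.
Variables (R : realType) (t : R).

Lemma exp_is_derive (k s : R) :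
  is_derive s (1:R) (fun r => expR (k * r)) (k * expR (k * s)).
Proof.
have h1 : is_derive s (1:R) (k *: (@id R)) (k *: 1) by apply: is_deriveZ.
have := is_derive1_comp (is_derive_expR (k * s)) h1.
by rewrite [k *: 1]mulr1 mulrC.
Qed.

Lemma exp_cont (k : R) : continuous (fun r : R => expR (k * r)).
Proof.
move=> s; apply: differentiable_continuous; apply/derivable1_diffP.
by have [] := @exp_is_derive k s.
Qed.

Lemma expC_cont (C k : R) : continuous (fun r : R => C * expR (k * r)).
Proof.
move=> r; apply: differentiable_continuous; apply/derivable1_diffP.
have := is_deriveZ C (@exp_is_derive k r); by case.
Qed.

Lemma L_prod (phi : R -> R) (k : R) :
  {within `[0, t], continuous phi} ->
  (forall s, s \in `]0, t[ -> derivable phi s 1) ->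
  (forall s, s \in `]0, t[ -> 0 <= derive1 phi s + k * phi s) ->
  forall x y, 0 <= x -> x <= y -> y <= t ->
    phi x * expR (k * x) <= phi y * expR (k * y).
Proof.
move=> pc pd pge x y x0 xy yt.
apply: (@ger0_derive1_ndecr R (fun s => phi s * expR (k * s)) 0 t) => //.
- move=> s sI; have ds := pd s sI; apply: derivableM => //.
- move=> s sI; have ds := pd s sI.
  have de := @exp_is_derive k s.
  rewrite derive1E.
  have -> : (fun s0 : R => phi s0 * expR (k * s0)) = phi * (fun r => expR (k * r)) by [].
  rewrite deriveM //.
  have -> : 'D_1 (fun r : R => expR (k * r)) s = k * expR (k * s) by case: de.
  rewrite -derive1E /GRing.scale /=.
  have := pge s sI; have := expR_gt0 (k * s); nra.
- move=> s.
  apply: (@continuousM R (subspace `[0, t]) phi (fun r => expR (k * r)) s); first exact: pc.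
  by apply: continuous_subspaceT => r; apply: exp_cont.
Qed.

Lemma L_sum (P : R -> R) (C k : R) :
  {within `[0, t], continuous P} ->
  (forall s, s \in `]0, t[ -> derivable P s 1) ->
  (forall s, s \in `]0, t[ -> 0 <= derive1 P s + C * (k * expR (k * s))) ->
  forall x y, 0 <= x -> x <= y -> y <= t ->
    P x + C * expR (k * x) <= P y + C * expR (k * y).
Proof.
move=> pc pd pge x y x0 xy yt.
apply: (@ger0_derive1_ndecr R (fun s => P s + C * expR (k * s)) 0 t) => //.
- move=> s sI; have ds := pd s sI; apply: derivableD => //.
- move=> s sI; have ds := pd s sI.
  have de := @exp_is_derive k s.
  rewrite derive1E.
  have de2 : is_derive s (1:R) (C *: (fun r : R => expR (k * r))) (C *: (k * expR (k * s))).
    exact: is_deriveZ.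
  have -> : (fun s0 : R => P s0 + C * expR (k * s0)) = P + C *: (fun r : R => expR (k * r)) by [].
  have dd : derivable (C *: (fun r : R => expR (k * r))) s 1 by case: de2.
  rewrite deriveD //.
  have -> : 'D_1 (C *: (fun r : R => expR (k * r))) s = C *: (k * expR (k * s)) by case: de2.
  rewrite -derive1E; exact: pge.
- move=> s.
  apply: (@continuousD R R (subspace `[0, t]) P (fun r => C * expR (k * r)) s); first exact: pc.
  apply: continuous_subspaceT => r.
  exact: expC_cont.
Qed.

End Mono.
Lemma lim_d (R : realType) (X Y Z : R) : 0 <= Z ->
  (forall d, 0 < d -> X <= Y + d * Z) -> X <= Y.
Proof.
move=> Z0 h; apply/ler_addgt0Pr => eps eps0.
have Z1 : 0 < Z + 1 by rewrite ltr_wpDl.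
have := h (eps / (Z + 1)) (divr_gt0 eps0 Z1).
move/le_trans; apply; rewrite lerD2l.
rewrite mulrAC ler_pdivrMr // ler_wpM2l //; [exact: ltW | by rewrite lerDl].
Qed.

Lemma subr_ge0R (R : realType) (x y : R) : x <= y -> 0 <= y - x.
Proof. by rewrite subr_ge0. Qed.

Section Helpers.
Variables (R : realType).

Lemma dplus (f : R -> R) (a s : R) : derivable f s 1 ->
  derivable (fun r => f r + a) s 1 /\ derive1 (fun r => f r + a) s = derive1 f s.
Proof.
move=> df.
have h : is_derive s (1:R) (f + cst a) ('D_1 f s + 0).
  by apply: is_deriveD => //; exact: derivableP.
split; first by case: h.
by rewrite derive1E; case: h => _ ->; rewrite addr0 derive1E.
Qed.

Lemma dneg (f : R -> R) (s : R) : derivable f s 1 ->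
  derivable (fun r => - f r) s 1 /\ derive1 (fun r => - f r) s = - derive1 f s.
Proof.
move=> df.
have h : is_derive s (1:R) (- f) (- 'D_1 f s).
  by apply: is_deriveN; exact: derivableP.
split; first by case: h.
by rewrite derive1E; case: h => _ ->; rewrite derive1E.
Qed.

Lemma cplus (A : set R) (f : R -> R) (a : R) : {within A, continuous f} ->
  {within A, continuous (fun r => f r + a)}.
Proof.
move=> cf x.
apply: (@continuousD R R (subspace A) f (cst a) x); first exact: cf.
exact: cst_continuous.
Qed.

Lemma cneg (A : set R) (f : R -> R) : {within A, continuous f} ->
  {within A, continuous (fun r => - f r)}.
Proof.
move=> cf x.
apply: (@continuousN R R (subspace A) f x); exact: cf.
Qed.

Lemma expR_inv (x : R) : expR x * expR (- x) = 1.
Proof. by rewrite -expRD subrr expR0. Qed.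

End Helpers.

Section Gron2.
Variables (R : realType) (n : nat) (e : R -> 'rV[R]_n) (t c a : R).
Hypothesis t0 : 0 < t.
Hypothesis c0 : 0 <= c.
Hypothesis a0 : 0 <= a.
Hypothesis ec : {within `[0, t], continuous e}.
Hypothesis ed : forall s, s \in `]0, t[ -> derivable e s 1.
Hypothesis eb : forall s, s \in `]0, t[ -> forall w,
  `|dotv w (derive1 e s)| <= enorm w * (c * (a + enorm (e s))).

Lemma Kd_bound W d s : 0 < d -> s \in `]0, t[ ->
  `|derive1 (Kf e W d) s| <= c * (a + enorm (e s)).
Proof.
move=> d0 sI.
have [_ ->] := Kf_derive W d0 (ed sI).
have k0 := Kf_gt0 e W s d0.
rewrite normrM normfV (gtr0_norm k0) ler_pdivrMr //.
apply: (le_trans (eb sI _)).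
rewrite mulrC ler_wpM2l //; last exact: Kf_ge.
by rewrite mulr_ge0 // addr_ge0 // enorm_ge0.
Qed.

Lemma g_ge (d s : R) : enorm (e s) <= Kf e 0 d s.
Proof. by have := Kf_ge e 0 d s; rewrite subr0. Qed.

Lemma M1 d : 0 < d -> forall x y, 0 <= x -> x <= y -> y <= t ->
  (Kf e 0 d x + a) * expR (c * x) <= (Kf e 0 d y + a) * expR (c * y).
Proof.
move=> d0.
apply: (@L_prod R t (fun r => Kf e 0 d r + a) c).
- by apply: cplus; apply: Kf_cont.
- by move=> s sI; have [] := dplus a (proj1 (Kf_derive 0 d0 (ed sI))).
move=> s sI.
have [_ ->] := dplus a (proj1 (Kf_derive 0 d0 (ed sI))).
have := Kd_bound 0 d0 sI; have := g_ge d s; rewrite ler_norml => h1 /andP[h2 h3].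
have := mulr_ge0 c0 (subr_ge0R h1). lra.
Qed.

Lemma M2 d : 0 < d -> forall x y, 0 <= x -> x <= y -> y <= t ->
  (Kf e 0 d y + a) * expR (- c * y) <= (Kf e 0 d x + a) * expR (- c * x).
Proof.
move=> d0 x y x0 xy yt.
suff : - (Kf e 0 d x + a) * expR (- c * x) <= - (Kf e 0 d y + a) * expR (- c * y).
  by rewrite !mulNr lerN2.
apply: (@L_prod R t (fun r => - (Kf e 0 d r + a)) (- c)) => //.
- by apply: cneg; apply: cplus; apply: Kf_cont.
- move=> s sI; have [h _] := dplus a (proj1 (Kf_derive 0 d0 (ed sI))).
  by have [] := dneg h.
move=> s sI.
have [h e1] := dplus a (proj1 (Kf_derive 0 d0 (ed sI))).
have [_ ->] := dneg h; rewrite e1.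
have := Kd_bound 0 d0 sI; have := g_ge d s; rewrite ler_norml => h1 /andP[h2 h3].
have := mulr_ge0 c0 (subr_ge0R h1). lra.
Qed.


Lemma itvP' s : s \in `]0, t[ -> 0 <= s /\ s <= t.
Proof. by rewrite in_itv /= => /andP[h1 h2]; split; apply: ltW. Qed.

Lemma M3 d : 0 < d ->
  Kf e (e t) d 0 - (Kf e 0 d t + a) * expR (c * t) <= Kf e (e t) d t - (Kf e 0 d t + a).
Proof.
move=> d0.
have := @L_sum R t (Kf e (e t) d) (- ((Kf e 0 d t + a) * expR (c * t))) (- c)
  (@Kf_cont R n e _ (e t) d ec) (fun s sI => proj1 (Kf_derive _ d0 (ed sI))).
have hyp : forall s, s \in `]0, t[ ->
  0 <= derive1 (Kf e (e t) d) s + - ((Kf e 0 d t + a) * expR (c * t)) * (- c * expR (- c * s)).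
  move=> s sI; have [s0 st] := itvP' sI.
  have m := M1 d0 s0 st (lexx t).
  have := Kd_bound (e t) d0 sI; rewrite ler_norml => /andP[h2 _].
  have h1 := g_ge d s.
  have E := expR_inv (c * s); rewrite [- c * s]mulNr.
  have E2 := expR_gt0 (- (c * s)).
  move: m h1 h2 E E2.
  move: (expR (c * s)) (expR (- (c * s))) (Kf e 0 d s) (Kf e 0 d t) (expR (c * t)).
  move=> E1 E2 gs gt Ect m h1 h2 E E2p.
  have : (gs + a) <= (gt + a) * Ect * E2.
    have := ler_wpM2r (ltW E2p) m. by rewrite -[(gs + a) * E1 * E2]mulrA E mulr1.
  move=> h3.
  have := ler_wpM2l c0 h3.
  have := ler_wpM2l c0 h1. lra.
move=> /(_ hyp 0 t (lexx 0) (ltW t0) (lexx t)).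
rewrite mulr0 expR0 mulr1 [- c * t]mulNr mulNr -mulrA expR_inv mulr1.
lra.
Qed.

Lemma M4 d : 0 < d ->
  Kf e (e 0) d t <= Kf e (e 0) d 0 + (Kf e 0 d 0 + a) * (expR (c * t) - 1).
Proof.
move=> d0.
have := @L_sum R t (fun r => - Kf e (e 0) d r) (Kf e 0 d 0 + a) c
  (cneg (@Kf_cont R n e _ (e 0) d ec)) (fun s sI => proj1 (dneg (proj1 (Kf_derive _ d0 (ed sI))))).
have hyp : forall s, s \in `]0, t[ ->
  0 <= derive1 (fun r => - Kf e (e 0) d r) s + (Kf e 0 d 0 + a) * (c * expR (c * s)).
  move=> s sI; have [s0 st] := itvP' sI.
  rewrite (proj2 (dneg (proj1 (Kf_derive _ d0 (ed sI))))).
  have m := M2 d0 (lexx 0) s0 st.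
  rewrite mulr0 expR0 mulr1 in m.
  have := Kd_bound (e 0) d0 sI; rewrite ler_norml => /andP[_ h2].
  have h1 := g_ge d s.
  have E := expR_inv (c * s); rewrite mulNr in m.
  have E1p := expR_gt0 (c * s).
  move: m h1 h2 E E1p.
  move: (expR (c * s)) (expR (- (c * s))) (Kf e 0 d s) (Kf e 0 d 0).
  move=> E1 E2 gs g0 m h1 h2 E E1p.
  have : (gs + a) <= (g0 + a) * E1.
    have := ler_wpM2r (ltW E1p) m. by rewrite -[(gs + a) * E2 * E1]mulrA [E2 * E1]mulrC E mulr1.
  move=> h3.
  have := ler_wpM2l c0 h3.
  have := ler_wpM2l c0 h1. nra.
move=> /(_ hyp 0 t (lexx 0) (ltW t0) (lexx t)).
rewrite !mulr0 expR0 mulr1.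
lra.
Qed.

Lemma gron_all :
 [/\ enorm (e t - e 0) <= (a + enorm (e t)) * (expR (c * t) - 1),
     enorm (e t - e 0) <= (a + enorm (e 0)) * (expR (c * t) - 1),
     enorm (e 0) + a <= (enorm (e t) + a) * expR (c * t) &
     enorm (e t) + a <= (enorm (e 0) + a) * expR (c * t)].
Proof.
have E1 : 1 <= expR (c * t).
  apply: le_trans (expR_ge1Dx _); rewrite lerDl mulr_ge0 //; exact: ltW.
have Ep := expR_gt0 (c * t).
have Einv := expR_inv (c * t).
have gle s d : 0 < d -> Kf e 0 d s <= enorm (e s) + d.
  by move=> d0; have := Kf_le e 0 s (ltW d0); rewrite subr0.
have n0 := enorm_ge0 (e 0); have nt := enorm_ge0 (e t).
split.
- apply: (lim_d (Z := expR (c * t))); first exact: ltW.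
  move=> d d0.
  have m := M3 d0.
  have k0 : enorm (e t - e 0) <= Kf e (e t) d 0 by rewrite enormB; exact: Kf_ge.
  have kt : Kf e (e t) d t <= d by have := Kf_le e (e t) t (ltW d0); rewrite subrr -enormN oppr0 /enorm /N2 big1 ?sqrtr0 ?add0r // => i _; rewrite mxE expr0n.
  have gt := gle t d d0; have gtt := g_ge d t.
  move: m k0 kt gt gtt E1; move: (Kf e (e t) d 0) (Kf e (e t) d t) (Kf e 0 d t) (expR (c * t)).
  move=> K0 Kt Gt E m k0 kt gt gtt E1'.
  nra.
- apply: (lim_d (Z := expR (c * t))); first exact: ltW.
  move=> d d0.
  have m := M4 d0.
  have kt : enorm (e t - e 0) <= Kf e (e 0) d t by exact: Kf_ge.
  have k0 : Kf e (e 0) d 0 <= d by have := Kf_le e (e 0) 0 (ltW d0); rewrite subrr -enormN oppr0 /enorm /N2 big1 ?sqrtr0 ?add0r // => i _; rewrite mxE expr0n.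
  have g0 := gle 0 d d0; have g00 := g_ge d 0.
  move: m k0 kt g0 g00 E1; move: (Kf e (e 0) d 0) (Kf e (e 0) d t) (Kf e 0 d 0) (expR (c * t)).
  move=> K0 Kt G0 E m k0 kt g0 g00 E1'.
  nra.
- apply: (lim_d (Z := expR (c * t))); first exact: ltW.
  move=> d d0.
  have m := M1 d0 (lexx 0) (ltW t0) (lexx t).
  rewrite mulr0 expR0 mulr1 in m.
  have gt := gle t d d0; have g00 := g_ge d 0.
  move: m gt g00 E1; move: (Kf e 0 d 0) (Kf e 0 d t) (expR (c * t)).
  move=> G0 Gt E m gt g00 E1'.
  nra.
- apply: (lim_d (Z := expR (c * t))); first exact: ltW.
  move=> d d0.
  have m := M2 d0 (lexx 0) (ltW t0) (lexx t).
  rewrite mulr0 expR0 mulr1 [- c * t]mulNr in m.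
  have := ler_wpM2r (ltW Ep) m.
  rewrite -mulrA [expR (- _) * _]mulrC Einv mulr1 => m2; clear m.
  have g0 := gle 0 d d0; have gtt := g_ge d t.
  move: m2 g0 gtt E1; move: (Kf e 0 d 0) (Kf e 0 d t) (expR (c * t)).
  move=> G0 Gt E m g0 gtt E1'.
  nra.
Qed.

End Gron2.
Unset Implicit Arguments.
Theorem proposition4p1 (R : realType) (n : nat) (T : R)
  (H : 'rV[R]_n -> R -> R -> 'rV[R]_n -> R) (u0 : 'rV[R]_n -> R)
  (C1 beta A2 B2 K3 : R) (u : 'rV[R]_n -> R -> R)
  (x : 'rV[R]_n) (t : R) (xi eta : R -> 'rV[R]_n) (uxi : R -> R) :
  0 < T ->
  (* u0 Lipschitz *)
  (exists L : R, forall y z, `|u0 y - u0 z| <= L * enorm (y - z)) ->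
  (* (H1) *)
  0 <= C1 -> (beta = 0 \/ beta = 1) ->
  (forall y z s v p, 0 <= s <= T ->
     `|H y s v p - H z s v p| <= C1 * (beta + enorm p) * enorm (y - z)) ->
  (* (H2) *)
  0 <= A2 -> 0 <= B2 ->
  (forall y s v p q, 0 <= s <= T ->
     `|H y s v p - H y s v q| <= (A2 * enorm y + B2) * enorm (p - q)) ->
  (* (H3) *)
  0 <= K3 ->
  (forall y s v w p, 0 <= s <= T ->
     `|H y s v p - H y s w p| <= K3 * `|v - w|) ->
  (* (H4) *)
  (forall y s v p q (l : R), 0 <= s <= T -> 0 <= l <= 1 ->
     H y s v (l *: p + (1 - l) *: q) <= l * H y s v p + (1 - l) * H y s v q) ->
  (* (H5) *)
  C2 (Hc H) ->
  (* (H4)_st *)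
  (forall y s v p, 0 <= s <= T -> posdef (DppH H y s v p)) ->
  viscosity_solution T H u0 u ->
  0 < t < T ->
  differentiable (uc u) (x, t) ->
  lie_solution H t xi eta uxi ->
  xi t = x -> eta t = Dx (uc u) (x, t) -> uxi t = u x t ->
  let Du := Dx (uc u) (x, t) in
  let c := C1 + K3 in
  [/\ (C1, K3) != (0, 0) ->
        [/\ enorm (Du - eta 0) <= (C1 * beta / c + enorm Du) * (expR (c * t) - 1),
            enorm (Du - eta 0) <= (C1 * beta / c + enorm (eta 0)) * (expR (c * t) - 1) &
            (enorm (eta 0) * expR (- (c * t)) - C1 * beta / c * (1 - expR (- (c * t)))
              <= enorm Du /\
            enorm Du <= enorm (eta 0) * expR (c * t) + C1 * beta / c * (expR (c * t) - 1))],
      K3 = 0 ->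
        enorm (eta 0) * expR (- (C1 * t)) - beta * (1 - expR (- (C1 * t))) <= enorm Du /\
        enorm Du <= enorm (eta 0) * expR (C1 * t) + beta * (expR (C1 * t) - 1),
      beta = 0 ->
        enorm (eta 0) * expR (- (c * t)) <= enorm Du /\
        enorm Du <= enorm (eta 0) * expR (c * t),
      C1 = 0 ->
        enorm (eta 0) * expR (- (K3 * t)) <= enorm Du /\
        enorm Du <= enorm (eta 0) * expR (K3 * t) &
      (C1, K3) = (0, 0) -> Du = eta 0].
Proof.
Proof.
move=> T0 _ C10 hbeta H1 _ _ _ K30 H3 _ hC2 _ _ tT _ hlie hxi heta huxi.
cbv zeta.
have [t0 tT'] : 0 < t /\ t < T by case/andP: tT.
have b0 : 0 <= beta by case: hbeta => ->.
set c := C1 + K3.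
set a := C1 * beta / c.
have c0 : 0 <= c by rewrite addr_ge0.
have a0 : 0 <= a by rewrite /a divr_ge0 // mulr_ge0.
have ca : C1 * beta = c * a.
  have [cz|cnz] := eqVneq c 0.
    have : C1 = 0 by move: cz; rewrite /c; lra.
    by move=> ->; rewrite cz !mul0r.
  by rewrite /a mulrCA mulfV // mulr1.
case: hlie => _ [ec0 [_ hd]].
have ec : {within `[0, t], continuous eta}.
  have -> : [set` `[0, t]] = [set s | 0 <= s <= t].
    by apply/seteqP; split => s /=; rewrite in_itv.
  exact: ec0.
have ed : forall s, s \in `]0, t[ -> derivable eta s 1.
  by move=> s; rewrite in_itv /= => /hd [].
have eb : forall s, s \in `]0, t[ -> forall w,
    `|dotv w (derive1 eta s)| <= enorm w * (c * (a + enorm (eta s))).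
  move=> s; rewrite in_itv /= => sI w.
  have [_ _ _ [_ -> _]] := hd s sI.
  have sT : 0 <= s <= T by case/andP: sI => s0 st; rewrite ltW //= ltW // (lt_trans st).
  rewrite dotvD dotvN dotvN dotvZ.
  have h1 := @DxH_bound R n H C1 beta T (xi s) s (uxi s) (eta s) w hC2 sT H1.
  have h2 := @DuH_bound R n H K3 T (xi s) s (uxi s) (eta s) hC2 sT H3.
  have h3 := CS w (eta s).
  have nw := enorm_ge0 w; have ne := enorm_ge0 (eta s).
  rewrite -opprD normrN (le_trans (ler_normD _ _)) // normrM.
  have : `|DuH H (xi s) s (uxi s) (eta s)| * `|dotv w (eta s)| <= K3 * (enorm w * enorm (eta s)).
    by apply: ler_pM => //; exact: normr_ge0.
  move=> h4.
  have -> : enorm w * (c * (a + enorm (eta s))) =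
     C1 * (beta + enorm (eta s)) * enorm w + K3 * (enorm w * enorm (eta s)).
    rewrite mulrDr mulrDr -ca /c; ring.
  exact: lerD.
have [G1 G2 G3 G4] := gron_all t0 c0 a0 ec ed eb.
rewrite heta in G1 G2 G3 G4.
set Du := Dx (uc u) (x, t).
rewrite -/Du in G1 G2 G3 G4.
have Ep := expR_gt0 (c * t).
have Einv := expR_inv (c * t).
have E1 : 1 <= expR (c * t).
  apply: le_trans (expR_ge1Dx _); rewrite lerDl mulr_ge0 //; exact: ltW.
have nD := enorm_ge0 Du; have n0 := enorm_ge0 (eta 0).
have G3' : enorm (eta 0) * expR (- (c * t)) - a * (1 - expR (- (c * t))) <= enorm Du.
  have := ler_wpM2r (ltW (expR_gt0 (- (c * t)))) G3.
  rewrite -mulrA Einv mulr1.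
  move: (expR (- (c * t))) => F h; nra.
have G4' : enorm Du <= enorm (eta 0) * expR (c * t) + a * (expR (c * t) - 1) by nra.
split.
- move=> _; split.
  + exact: G1.
  + exact: G2.
  + by split.
- move=> K0.
  have cC : c = C1 by rewrite /c K0 addr0.
  have [C0|Cn0] := eqVneq C1 0.
    have cz : c = 0 by rewrite cC C0.
    have az : a = 0 by rewrite /a cz invr0 mulr0.
    move: G3' G4'; rewrite az cz C0 !mul0r oppr0 expR0 subrr !mulr0.
    move=> p q; split; lra.
  have ab : a = beta by rewrite /a cC mulrAC mulfV // mul1r.
  by rewrite -cC -ab.
- move=> b00.
  have az : a = 0 by rewrite /a b00 mulr0 mul0r.
  move: G3' G4'; rewrite az !mul0r subr0 addr0; split => //.
- move=> C0.
  have cK : c = K3 by rewrite /c C0 add0r.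
  have az : a = 0 by rewrite /a C0 !mul0r.
  move: G3' G4'; rewrite az -cK !mul0r subr0 addr0; split => //.
move=> [C0 K0].
have cz : c = 0 by rewrite /c C0 K0 addr0.
move: G1; rewrite cz mul0r expR0 subrr mulr0 => G1.
have : enorm (Du - eta 0) = 0 by apply/eqP; rewrite eq_le G1 enorm_ge0.
by move/enorm_eq0/eqP; rewrite subr_eq0 => /eqP.
Qed.
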